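(* Let $G$ be a graph on $n\ge 3$ vertices, with an edge-colouring using exactly $r$ colours. Let $f:\binom{V(G)}{2}\to\mathbb{Z}_{\ge 0}$ be such that for all distinct $u,v\in V(G)$, there are $f(u,v)$ disjoint monochromatic super-paths connecting $u$ and $v$. Then \[ e(G)\ge\left\lceil\frac{w(f)}{n-2}\right\rceil+r-1. \]
   Context: All graphs are finite, simple and undirected. A super-path is a path of length at least two. Paths are called disjoint if they are internally vertex-disjoint. An edge-coloured path is monochromatic if all its edges have the same colour. For $f:\binom{V(G)}{2}\to\mathbb{Z}_{\ge 0}$ write $f(u,v)=f(\{u,v\})$, and define the weight $w(f)=\sum_{\{u,v\}\in\binom{V(G)}{2}} f(u,v)$. *)

(* Defs.v *)
From mathcomp Require Import all_boot.
Set Implicit Arguments. Unset Strict Implicit. Unset Printing Implicit Defensive.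

Definition simple_graph (T : finType) (e : rel T) : Prop :=
  symmetric e /\ irreflexive e.

Definition edge_set (T : finType) (e : rel T) : {set {set T}} :=
  [set p : {set T} | [exists u, exists v, (p == [set u; v]) && e u v]].

Definition num_edges (T : finType) (e : rel T) : nat := #|edge_set e|.

Definition edge_colouring_exactly (T : finType) (e : rel T) (r : nat)
    (c : T -> T -> 'I_r) : Prop :=
  (forall u v, e u v -> c u v = c v u) /\
  (forall k : 'I_r, exists u v, e u v /\ c u v = k).

(* A monochromatic super-path from u to v with interior vertex sequence s:
   the vertex sequence u :: s ++ [:: v] has no repetitions, consecutive
   vertices are adjacent, all edges have the same colour, and the length
   (number of edges = size s + 1) is at least two. *)
Definition mono_superpath (T : finType) (e : rel T) (r : nat)
    (c : T -> T -> 'I_r) (u v : T) (s : seq T) : Prop :=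
  (1 <= size s) /\ uniq (u :: rcons s v) /\
  exists k : 'I_r, path (fun x y => e x y && (c x y == k)) u (rcons s v).

Definition has_disjoint_mono_superpaths (T : finType) (e : rel T) (r : nat)
    (c : T -> T -> 'I_r) (u v : T) (m : nat) : Prop :=
  exists ps : seq (seq T),
    size ps = m /\
    (forall s, s \in ps -> mono_superpath e c u v s) /\
    pairwise (fun s t : seq T => [disjoint s & t]) ps.

Definition weight (T : finType) (f : {set T} -> nat) : nat :=
  \sum_(p : {set T} | #|p| == 2) f p.

(* ceiling division for b > 0 *)
Definition ceil_div (a b : nat) : nat := (a + b.-1) %/ b.

(* Main.v *)
Require Import Defs.
From mathcomp Require Import all_boot.
From mathcomp Require Import zify.
Set Implicit Arguments. Unset Strict Implicit. Unset Printing Implicit Defensive.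

Lemma card_sumG (I : finType) (A : {pred I}) : #|A| = \sum_x (x \in A : nat).
Proof. by rewrite -sum1_card big_mkcond. Qed.

Section Main.
Variables (T : finType) (r : nat) (e : rel T) (c : T -> T -> 'I_r).
Hypothesis esym : symmetric e.
Hypothesis eirr : irreflexive e.
Hypothesis csym : forall u v, e u v -> c u v = c v u.

Definition R (k : 'I_r) := fun x y => e x y && (c x y == k).

Lemma R_sym k x y : R k x y = R k y x.
Proof.
rewrite /R esym; case Hyx: (e y x) => //=.
by rewrite (csym Hyx).
Qed.

Lemma mono_rev u v s : mono_superpath e c u v s -> mono_superpath e c v u (rev s).
Proof.
case=> Hs [Hu [k Hp]]; split; first by rewrite size_rev.
split.
  have -> : v :: rcons (rev s) u = rev (u :: rcons s v).
    by rewrite rev_cons rev_rcons.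
  by rewrite rev_uniq.
exists k.
have H' : path (fun a b => e b a && (c b a == k)) (last u (rcons s v)) (rev (belast u (rcons s v))).
  by rewrite rev_path.
rewrite last_rcons belast_rcons rev_cons in H'.
apply: sub_path H' => x y /=; by move: (R_sym k y x); rewrite /R => ->.
Qed.

Definition dg (k : 'I_r) (z : T) : nat := #|[set y | e z y && (c z y == k)]|.
Definition Acond u x v := (dg (c u x) x == 1) || (dg (c u x) v == 0).

Lemma dg_pos k a b : e a b -> c a b = k -> 0 < dg k a.
Proof.
move=> Hab Hc; rewrite /dg; apply/card_gt0P; exists b.
by rewrite inE Hab Hc eqxx.
Qed.

Lemma dg_pos' k a b : e a b -> c a b = k -> 0 < dg k b.
Proof.
move=> Hab Hc; apply: (@dg_pos k b a); first by rewrite esym.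
by rewrite -(csym Hab).
Qed.

Lemma head_props u v s : mono_superpath e c u v s ->
  let x := head u s in
  [/\ e u x, x != v, x \in s & ~~ Acond u x v].
Proof.
case=> Hs [Hu [k Hp]].
case: s Hs Hu Hp => [//|x s'] _ Hu Hp /=.
have Hux : R k u x by move: Hp => /= /andP [].
have Hp2 : path (R k) x (rcons s' v) by move: Hp => /= /andP [].
have [x' Hxx' Hx'in] : exists2 x', R k x x' & x' \in rcons s' v.
  move: Hp2; case E: s' => [|a l] /= /andP [H1 _]; [exists v | exists a]; by rewrite ?inE ?eqxx.
have Hlast : R k (last x s') v.
  by move: Hp2; rewrite rcons_path => /andP [].
move: Hu => /= /andP [Hu1 /andP [Hx1 _]].
have Hxv : x != v.
  by move: Hx1; apply: contraNneq => ->; rewrite mem_rcons mem_head.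
have Hx'u : x' != u.
  by move: Hu1; apply: contraNneq => <-; rewrite inE Hx'in orbT.
move: Hux => /andP [Heux /eqP Hcux].
move: Hxx' => /andP [Hexx' /eqP Hcxx'].
move: Hlast => /andP [Hely /eqP Hcly].
split => //; first by rewrite mem_head.
rewrite /Acond negb_or Hcux; apply/andP; split.
- have : 1 < dg k x.
    rewrite /dg (cardsD1 u) inE esym Heux -(csym Heux) Hcux eqxx /= ltnS.
    apply/card_gt0P; exists x'; rewrite !inE Hx'u Hexx' Hcxx' eqxx.
    done.
  by case: (dg k x) => [|[|]].
- have : 0 < dg k v.
    by apply: (@dg_pos' k (last x s') v).
  by case: (dg k v).
Qed.

Lemma head_rev_last (x : T) s : head x (rev s) = last x s.
Proof. by case/lastP: s => [|s a] //=; rewrite rev_rcons last_rcons. Qed.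

Lemma last_props u v s : mono_superpath e c u v s ->
  let y := last v s in
  [/\ e v y, y != u, y \in s & ~~ Acond v y u].
Proof.
move=> /mono_rev /head_props /=; rewrite head_rev_last mem_rev; by [].
Qed.

Lemma single_col u v s : mono_superpath e c u v s -> head u s = last v s ->
  c u (head u s) = c (head u s) v.
Proof.
case=> Hs [Hu [k Hp]].
case: s Hs Hu Hp => [//|x s'] _ Hu Hp /= Hhl.
case: s' Hu Hp Hhl => [|a l] Hu Hp Hhl /=.
  by move: Hp => /= /and3P [/andP [_ /eqP ->] /andP [_ /eqP ->] _].
exfalso; move: Hu => /= /andP [_ /andP [Hx _]].
move: Hx; rewrite Hhl => /negP; apply.
move: (mem_last a l); rewrite !inE mem_rcons !inE => /orP [->|->]; by rewrite ?orbT.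
Qed.

Definition Aset u v := [set x | e u x && (x != v) && Acond u x v].
Definition Cset u v := [set x | [&& e u x, e x v, c u x != c x v, ~~ Acond u x v & ~~ Acond v x u]].

Lemma card_sum (A : {pred T}) : #|A| = \sum_x (x \in A : nat).
Proof. by rewrite -sum1_card big_mkcond. Qed.

Lemma share (ps : seq (seq T)) : pairwise (fun s t : seq T => [disjoint s & t]) ps ->
  forall s t x, s \in ps -> t \in ps -> x \in s -> x \in t -> s = t.
Proof.
elim: ps => [//|a l IH] /= /andP [Ha Hl] s t x.
rewrite !inE => /orP [/eqP -> | Hs] /orP [/eqP -> | Ht] Hxs Hxt //.
- by move/allP: Ha => /(_ t Ht) /disjointFr /(_ Hxs); rewrite Hxt.
- by move/allP: Ha => /(_ s Hs) /disjointFr /(_ Hxt); rewrite Hxs.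
- exact: IH Hl _ _ _ Hs Ht Hxs Hxt.
Qed.

Lemma ps_uniq u v (ps : seq (seq T)) : (forall s, s \in ps -> mono_superpath e c u v s) ->
  pairwise (fun s t : seq T => [disjoint s & t]) ps -> uniq ps.
Proof.
elim: ps => [//|a l IH] Hm /= /andP [Ha Hl]; apply/andP; split; last first.
  by apply: IH => // s Hs; apply: Hm; rewrite inE Hs orbT.
apply/negP => Hal; move/allP: Ha => /(_ a Hal).
have [Hs _] := Hm a (mem_head _ _).
case: a {Hm Hal} Hs => [//|x l'] _ /disjointFr /(_ (mem_head _ _)).
by rewrite mem_head.
Qed.

Lemma pair_bound u v (ps : seq (seq T)) : u != v ->
  (forall s, s \in ps -> mono_superpath e c u v s) ->
  pairwise (fun s t : seq T => [disjoint s & t]) ps ->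
  2 * size ps + #|Aset u v| + #|Aset v u| + #|Cset u v| + 2 * e u v <= #|[set x | e u x]| + #|[set x | e v x]|.
Proof.
move=> Huv Hm Hd.
have Hu := ps_uniq Hm Hd.
set H := map (head u) ps.
set L := map (last v) ps.
have HH : size ps = #|H|.
  rewrite (card_uniqP _) ?size_map //; rewrite map_inj_in_uniq // => s t Hs Ht Hst.
  have [_ _ Hx _] := head_props (Hm s Hs).
  have [_ _ Hy _] := head_props (Hm t Ht).
  by apply: (share Hd Hs Ht Hx); rewrite Hst.
have HL : size ps = #|L|.
  rewrite (card_uniqP _) ?size_map //; rewrite map_inj_in_uniq // => s t Hs Ht Hst.
  have [_ _ Hx _] := last_props (Hm s Hs).
  have [_ _ Hy _] := last_props (Hm t Ht).
  by apply: (share Hd Hs Ht Hx); rewrite Hst.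
have h1 : forall x, x \in H -> [/\ e u x, x != v & ~~ Acond u x v].
  by move=> x /mapP [s Hs ->]; have [] := head_props (Hm s Hs).
have h2 : forall x, x \in L -> [/\ e v x, x != u & ~~ Acond v x u].
  by move=> x /mapP [s Hs ->]; have [] := last_props (Hm s Hs).
have h3 : forall x, x \in H -> x \in L -> c u x = c x v.
  move=> x /mapP [s Hs ->] /mapP [t Ht Hst].
  have [_ _ Hx _] := head_props (Hm s Hs).
  have [_ _ Hy _] := last_props (Hm t Ht).
  have Est : s = t by apply: (share Hd Hs Ht Hx); rewrite Hst.
  by subst t; apply: single_col (Hm s Hs) Hst.
have Hcard1 : #|[set x | e u x]| = e u v + \sum_x (e u x && (x != v) : nat).
  rewrite card_sum (bigD1 v) //= inE [in X in _ = _ + X](bigD1 v) //= eqxx andbF add0n.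
  congr (_ + _); apply: eq_bigr => x Hx; by rewrite inE Hx andbT.
have Hcard2 : #|[set x | e v x]| = e u v + \sum_x (e v x && (x != u) : nat).
  rewrite card_sum (bigD1 u) //= inE esym [in X in _ = _ + X](bigD1 u) //= eqxx andbF add0n.
  congr (_ + _); apply: eq_bigr => x Hx; by rewrite inE Hx andbT.
have S1 : \sum_x ((x \in H) + (x \in Aset u v) + ((x \in Cset u v) && (x \notin H)) : nat)
    <= \sum_x (e u x && (x != v) : nat).
  apply: leq_sum => x _; case HxH: (x \in H).
    have [E1 E2 E3] := h1 x HxH; rewrite !inE E1 E2 (negbTE E3) /=; by rewrite andbF.
  rewrite !inE andbT; case: (eqVneq x v) => [->|Hxv]; first by rewrite eirr !andbF.
  rewrite ?Hxv /=; case: (e u x); case: (Acond u x v) => //=; rewrite ?andbF ?Hxv // ?andbT ?add0n ?leq_b1 //.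
have S2 : \sum_x ((x \in L) + (x \in Aset v u) + ((x \in Cset u v) && (x \in H)) : nat)
    <= \sum_x (e v x && (x != u) : nat).
  apply: leq_sum => x _; case HxL: (x \in L).
    have [E1 E2 E3] := h2 x HxL; rewrite !inE E1 E2 (negbTE E3) /=.
    case HxH: (x \in H); last by rewrite andbF.
    by rewrite (h3 x HxH HxL) eqxx /= !andbF.
  rewrite !inE; case: (eqVneq x u) => [->|Hxu]; first by rewrite eirr !andbF.
  rewrite ?Hxu /= [e x v]esym; case: (e v x); case: (Acond v x u) => //=; rewrite ?andbF ?Hxu // ?andbT ?add0n ?leq_b1 //.
have S3 : #|Cset u v| = \sum_x (((x \in Cset u v) && (x \notin H)) + ((x \in Cset u v) && (x \in H)) : nat).
  rewrite card_sum; apply: eq_bigr => x _; by case: (x \in Cset u v); case: (x \in H).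
rewrite !big_split /= in S1 S2 S3.
have E2 : 2 * size ps = #|H| + #|L| by rewrite -HH -HL; lia.
rewrite Hcard1 Hcard2 E2 S3 !(card_sum (mem (Aset _ _))) !(card_sum (mem H)) (card_sum (mem L)) /=.
move: S1 S2; set a1 := \sum_x _; set a2 := \sum_x _; set a3 := \sum_x _; set a4 := \sum_x _.
set a5 := \sum_x _; set a6 := \sum_x _; set a7 := \sum_x _; set a8 := \sum_x _.
lia.
Qed.

Lemma set2_eqE (x y a b : T) : a != b ->
  ([set x; y] == [set a; b]) = ((x == a) && (y == b)) || ((x == b) && (y == a)).
Proof.
move=> Hab; case: eqP => [E|NE].
  have xa : x \in [set a; b] by rewrite -E set21.
  have yb : y \in [set a; b] by rewrite -E set22.
  have ax : a \in [set x; y] by rewrite E set21.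
  have bx : b \in [set x; y] by rewrite E set22.
  move: xa yb ax bx; rewrite !inE.
  case/orP=> /eqP ?; case/orP=> /eqP ?; subst; rewrite ?eqxx //= ?orbT //;
  rewrite ?(negbTE Hab) ?(eq_sym b a) ?(negbTE Hab) //= ?orbF ?orbb.
symmetry; apply/negP => /orP [] /andP [/eqP Hx /eqP Hy]; apply: NE; subst => //.
by rewrite setUC.
Qed.

Lemma dcount (F : {set T} -> nat) :
  \sum_u \sum_v ((u != v) * F [set u; v]) = 2 * \sum_(p : {set T} | #|p| == 2) F p.
Proof.
rewrite pair_big /=.
rewrite (eq_bigr (fun uv => if uv.1 != uv.2 then F [set uv.1; uv.2] else 0)); last first.
  by move=> uv _; case: (uv.1 != uv.2); rewrite ?mul1n ?mul0n.
rewrite -big_mkcond /=.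
rewrite (partition_big (fun uv : T * T => [set uv.1; uv.2]) (fun p : {set T} => #|p| == 2)); last first.
  by move=> [x y] /= Hxy; rewrite cards2 Hxy.
rewrite big_distrr /=; apply: eq_bigr => p /cards2P [a [b [Hab ->]]].
rewrite (eq_bigr (fun _ => F [set a; b])); last by move=> uv /andP [_ /eqP ->].
have Hc : #|[pred uv : T * T | (uv.1 != uv.2) && ([set uv.1; uv.2] == [set a; b])]| = 2.
  have -> : 2 = #|pred2 (a, b) (b, a)| by rewrite card2 xpair_eqE negb_and Hab.
  apply: eq_card => [[x y]] /=; rewrite !inE /= set2_eqE // !xpair_eqE.
  case: (eqVneq x y) => [->|Hxy] /=; last by [].
  symmetry; apply/negP => /orP [] /andP [/eqP E1 /eqP E2]; move: Hab; by rewrite -E1 -E2 eqxx.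
rewrite -[in RHS]Hc card_sumG big_mkcond /= big_distrl /=; apply: eq_bigr => uv _ /=.
by rewrite inE; case: ifP; rewrite ?mul1n ?mul0n.
Qed.

Lemma edge_setE u v : u != v -> ([set u; v] \in edge_set e) = e u v.
Proof.
move=> Huv; rewrite /edge_set inE; apply/existsP/idP => [[a /existsP [b /andP [/eqP E Hab]]]|Huv'].
  have Hab' : a != b by apply: contraTneq Hab => ->; rewrite eirr.
  move: (eqxx [set u; v]); rewrite {2}E set2_eqE //.
  by case/orP => /andP [/eqP -> /eqP ->] //; rewrite esym.
by exists u; apply/existsP; exists v; rewrite eqxx Huv'.
Qed.

Lemma handshake : \sum_u \sum_v ((u != v) * e u v) = 2 * num_edges e.
Proof.
transitivity (\sum_u \sum_v ((u != v) * ([set u; v] \in edge_set e))).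
  apply: eq_bigr => u _; apply: eq_bigr => v _.
  by case: (eqVneq u v) => [->|Huv]; rewrite ?mul0n // edge_setE.
rewrite (dcount (fun p => (p \in edge_set e) : nat)) /num_edges; congr (_ * _).
rewrite card_sumG [RHS](bigID (fun p : {set T} => #|p| == 2)) /=.
rewrite [X in _ = _ + X]big1 ?addn0 //.
move=> p Hp; apply/eqP; rewrite eqb0; apply: contra Hp.
rewrite /edge_set inE => /existsP [a /existsP [b /andP [/eqP -> Hab]]].
rewrite cards2 (_ : a != b) //; apply: contraTneq Hab => ->; by rewrite eirr.
Qed.

Lemma deg_sum : \sum_u #|[set x | e u x]| = 2 * num_edges e.
Proof.
rewrite -handshake; apply: eq_bigr => u _; rewrite card_sum; apply: eq_bigr => v _.
by rewrite inE; case: (eqVneq u v) => [->|_]; rewrite ?eirr ?muln0 ?mul1n.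
Qed.

Lemma sum_eq1 (I : finType) (a : I) : \sum_i ((i == a) : nat) = 1.
Proof. by rewrite (bigD1 a) //= eqxx big1 // => i /negbTE ->. Qed.

Lemma sum_pickG (I : finType) (a : I) (F : I -> nat) :
  (forall i, i != a -> F i = 0) -> \sum_i F i = F a.
Proof. by move=> H; rewrite (bigD1 a) //= big1 ?addn0. Qed.

Lemma dg_sum k z : dg k z = \sum_y (e z y * (c z y == k)).
Proof. by rewrite /dg card_sum; apply: eq_bigr => y _; rewrite inE mulnb. Qed.

Lemma dg_sum' k z : dg k z = \sum_y (e y z * (c y z == k)).
Proof.
rewrite dg_sum; apply: eq_bigr => y _; rewrite esym.
by case Hyz: (e y z) => //=; rewrite (csym Hyz).
Qed.

Lemma sum_two (u x : T) : u != x -> \sum_v ((v != u) && (v != x) : nat) = #|T| - 2.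
Proof.
move=> Hux; have := cardsC [set u; x]; rewrite cards2 Hux => H.
have -> : \sum_v ((v != u) && (v != x) : nat) = #|~: [set u; x]|.
  by rewrite card_sum; apply: eq_bigr => v _; rewrite !inE negb_or.
lia.
Qed.

Definition leaves k := [set z | dg k z == 1].
Definition bad k := [forall z, dg k z != 0] && (#|leaves k| <= 1).
Definition Ak k := \sum_u \sum_v \sum_x ((u != v) * ((c u x == k) * (e u x && (x != v) && Acond u x v))).

Lemma SA_split : \sum_u \sum_v ((u != v) * #|Aset u v|) = \sum_k Ak k.
Proof.
rewrite /Ak [RHS]exchange_big; apply: eq_bigr => u _; rewrite [RHS]exchange_big; apply: eq_bigr => v _.
rewrite [RHS]exchange_big card_sum big_distrr; apply: eq_bigr => x _ /=.
rewrite -big_distrr /= inE; congr (_ * _).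
rewrite -big_distrl /= (sum_pickG (a := c u x)) ?eqxx ?mul1n //.
by move=> k Hk; rewrite eq_sym (negbTE Hk).
Qed.

Lemma GA k : 2 <= #|leaves k| -> 2 * (#|T| - 2) <= Ak k.
Proof.
move=> Hl.
have step : \sum_u \sum_v \sum_x ((dg k x == 1) * ((e u x * (c u x == k)) * ((v != u) && (v != x))))
   <= Ak k.
  apply: leq_sum => u _; apply: leq_sum => v _; apply: leq_sum => x _.
  case Hx: (dg k x == 1); case He: (e u x); case Hc: (c u x == k);
    case Hvu: (v != u); case Hvx: (v != x) => //=.
  by rewrite eq_sym Hvu eq_sym Hvx /Acond (eqP Hc) Hx.
apply: leq_trans step.
have -> : \sum_u \sum_v \sum_x ((dg k x == 1) * ((e u x * (c u x == k)) * ((v != u) && (v != x))))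
   = \sum_x ((dg k x == 1) * (#|T| - 2)).
  under eq_bigr => u _ do rewrite exchange_big.
  rewrite exchange_big /=; apply: eq_bigr => x _.
  rewrite [RHS](_ : _ = \sum_u ((dg k x == 1) * ((e u x * (c u x == k)) * (#|T| - 2)))); last first.
    rewrite -big_distrr /= -big_distrl /= -dg_sum'.
    by case Hx: (dg k x == 1); rewrite ?(eqP Hx) ?mul1n ?mul0n.
  apply: eq_bigr => u _; rewrite -!big_distrr /=.
  case He: (e u x); last by rewrite !mul0n.
  rewrite sum_two //; by apply: contraTneq He => ->; rewrite eirr.
rewrite -big_distrl /= leq_mul2r; apply/orP; right.
apply: leq_trans Hl _; rewrite /leaves card_sum; apply: eq_leq; apply: eq_bigr => z _; by rewrite inE.
Qed.

Lemma sum_all1 : \sum_(v : T) 1 = #|T|.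
Proof. by rewrite sum1_card. Qed.

Lemma GB k : #|leaves k| <= 1 -> (exists z, dg k z = 0) -> (exists a b, e a b /\ c a b = k) ->
  2 * (#|T| - 2) <= Ak k.
Proof.
move=> Hl [z0 Hz0] [a [b [Hab Hcab]]].
have step : \sum_u \sum_v \sum_x ((dg k v == 0) * (e u x * (c u x == k))) <= Ak k.
  apply: leq_sum => u _; apply: leq_sum => v _; apply: leq_sum => x _.
  case Hv: (dg k v == 0); case He: (e u x); case Hc: (c u x == k) => //=.
  have Hu0 := dg_pos He (eqP Hc).
  have Hx0 := dg_pos' He (eqP Hc).
  have -> : u != v by apply: contraTneq Hv => <-; rewrite -lt0n.
  have -> : x != v by apply: contraTneq Hv => <-; rewrite -lt0n.
  by rewrite /Acond (eqP Hc) Hv orbT.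
apply: leq_trans step.
have -> : \sum_u \sum_v \sum_x ((dg k v == 0) * (e u x * (c u x == k)))
    = (\sum_v (dg k v == 0 : nat)) * (\sum_u dg k u).
  transitivity (\sum_u \sum_v ((dg k v == 0) * dg k u)).
    apply: eq_bigr => u _; apply: eq_bigr => v _; by rewrite (dg_sum k u) big_distrr.
  rewrite exchange_big big_distrl /=; apply: eq_bigr => v _; by rewrite big_distrr.
set Z := \sum_v (dg k v == 0 : nat).
set D := \sum_u dg k u.
set P := \sum_v (dg k v != 0 : nat).
have HZP : Z + P = #|T|.
  rewrite -sum_all1 -big_split /=; apply: eq_bigr => v _; by case: (dg k v == 0).
have HDP : 2 * P <= D + 1.
  apply: leq_trans (_ : D + #|leaves k| <= D + 1); last by rewrite leq_add2l.
  rewrite /leaves card_sum -big_split big_distrr /=; apply: leq_sum => v _; rewrite inE.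
  by case: (dg k v) => [|[|m]].
have HZ : 1 <= Z.
  rewrite /Z (bigD1 z0) //= Hz0 eqxx; by [].
have HP : 2 <= P.
  have Hab' : a != b by apply: contraTneq Hab => ->; rewrite eirr.
  have Ha := dg_pos Hab Hcab.
  have Hb := dg_pos' Hab Hcab.
  apply: leq_trans (_ : \sum_v ((v == a) + (v == b) : nat) <= P).
    by rewrite big_split /= !sum_eq1.
  apply: leq_sum => v _; case: (eqVneq v a) => [->|Hva]; first by rewrite (negbTE Hab') -lt0n Ha.
  case: (eqVneq v b) => [->|Hvb] //=; by rewrite -lt0n Hb.
nia.
Qed.

Lemma swap3 (I J K : finType) (F : I -> J -> K -> nat) :
  \sum_a \sum_b \sum_c F a b c = \sum_b \sum_c \sum_a F a b c.
Proof. rewrite exchange_big; apply: eq_bigr => b _; by rewrite exchange_big. Qed.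

Definition G x i j := [&& bad i, bad j, i != j, 1 < dg i x & 1 < dg j x].

Lemma BC_step1 x u v :
  \sum_i \sum_j (G x i j * ((e x u * (c x u == i)) * (e x v * (c x v == j))))
  <= (u != v) * (x \in Cset u v).
Proof.
rewrite (sum_pickG (a := c x u)); last first.
  by move=> i Hi; apply: big1 => j _; rewrite eq_sym (negbTE Hi) ?muln0 ?mul0n.
rewrite (sum_pickG (a := c x v)); last first.
  by move=> j Hj; rewrite eq_sym (negbTE Hj) !muln0.
rewrite !eqxx !muln1.
case Hg: (G x (c x u) (c x v)); case Heu: (e x u); case Hev: (e x v) => //=.
move: Hg => /and5P [Bu Bv Hne D1 D2].
have Huv : u != v by apply: contraNneq Hne => ->.
have Heu' : e u x by rewrite esym.
have Hev' : e v x by rewrite esym.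
rewrite Huv inE Heu' Hev /= (csym Heu') Hne /Acond (csym Heu') (csym Hev') /=.
move: Bu Bv => /andP [/forallP Bu _] /andP [/forallP Bv _].
rewrite (negbTE (Bu v)) (negbTE (Bv u)) !orbF.
by rewrite !neq_ltn D1 D2 !orbT.
Qed.

Lemma BC_lower : \sum_x \sum_i \sum_j (G x i j * (dg i x * dg j x))
   <= \sum_u \sum_v ((u != v) * #|Cset u v|).
Proof.
have -> : \sum_x \sum_i \sum_j (G x i j * (dg i x * dg j x)) =
  \sum_x \sum_i \sum_j \sum_u \sum_v (G x i j * ((e x u * (c x u == i)) * (e x v * (c x v == j)))).
  apply: eq_bigr => x _; apply: eq_bigr => i _; apply: eq_bigr => j _.
  symmetry.
  transitivity (\sum_u (G x i j * (e x u * (c x u == i)) * dg j x)).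
    apply: eq_bigr => u _; rewrite (dg_sum j x) big_distrr /=; apply: eq_bigr => v _; by rewrite !mulnA.
  by rewrite -big_distrl -big_distrr /= -dg_sum mulnA.
under eq_bigr => x _ do under eq_bigr => i _ do rewrite swap3.
under eq_bigr => x _ do rewrite swap3.
rewrite swap3; apply: leq_sum => u _; apply: leq_sum => v _.
rewrite card_sum big_distrr /=; apply: leq_sum => x _; exact: BC_step1.
Qed.

Definition tb := \sum_k (bad k : nat).
Definition gv x := [forall k, bad k ==> (1 < dg k x)].

Lemma pair_count : \sum_i \sum_j ((bad i && bad j && (i != j)) : nat) = tb * (tb - 1).
Proof.
rewrite /tb big_distrl /=; apply: eq_bigr => i _.
case Bi: (bad i) => /=; last by rewrite big1.
rewrite mul1n.
have : \sum_j (bad j : nat) = \sum_j ((bad j && (i != j)) : nat) + 1.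
  rewrite (bigD1 i) //= [X in _ = X + _](bigD1 i) //= eqxx andbF Bi add0n addnC.
  congr (_ + _); apply: eq_bigr => j Hj; by rewrite eq_sym Hj andbT.
move=> ->; by rewrite addnK.
Qed.

Lemma BC_count : \sum_x ((gv x : nat) * (4 * (tb * (tb - 1)))) <= \sum_x \sum_i \sum_j (G x i j * (dg i x * dg j x)).
Proof.
apply: leq_sum => x _; case Hg: (gv x); last by rewrite mul0n.
rewrite mul1n -pair_count big_distrr; apply: leq_sum => i _; rewrite big_distrr; apply: leq_sum => j _ /=.
case Hb: (bad i && bad j && (i != j)); last by rewrite muln0.
move: Hb => /andP [/andP [Bi Bj] Hij].
move/forallP: Hg => Hg.
have Di := implyP (Hg i) Bi; have Dj := implyP (Hg j) Bj.
rewrite /G Bi Bj Hij Di Dj /= mul1n muln1.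
nia.
Qed.

Lemma nongood : \sum_x (~~ gv x : nat) <= tb.
Proof.
apply: leq_trans (_ : \sum_x \sum_k ((bad k && (dg k x == 1)) : nat) <= tb).
  apply: leq_sum => x _; case Hg: (gv x) => //=.
  move/negbT: Hg => /forallPn [k]; rewrite negb_imply => /andP [Bk Hd].
  rewrite (bigD1 k) //= Bk /=.
  move: Bk => /andP [/forallP /(_ x) Hx _].
  have -> : dg k x == 1 by move: Hx Hd; case: (dg k x) => [|[|m]].
  by [].
rewrite exchange_big /tb; apply: leq_sum => k _.
case Bk: (bad k) => /=; last by rewrite big1.
move: Bk => /andP [_ Hl]; apply: leq_trans Hl.
by rewrite /leaves card_sum; apply: eq_leq; apply: eq_bigr => x _; rewrite inE.
Qed.

Lemma tb_le (x0 : T) : tb <= #|T| - 1.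
Proof.
apply: leq_trans (_ : \sum_k dg k x0 <= _).
  apply: leq_sum => k _; case Bk: (bad k) => //=.
  move: Bk => /andP [/forallP /(_ x0) H _]; by rewrite lt0n.
under eq_bigr => k _ do rewrite dg_sum.
rewrite exchange_big /=.
apply: leq_trans (_ : \sum_y (y != x0 : nat) <= _).
  apply: leq_sum => y _; rewrite -big_distrr /= (sum_pickG (a := c x0 y)); last first.
    by move=> k Hk; rewrite eq_sym (negbTE Hk).
  rewrite eqxx muln1; case: (eqVneq y x0) => [->|_]; by rewrite ?eirr ?leq_b1.
rewrite subn1 -(cardsC1 x0) card_sum; apply: eq_leq; apply: eq_bigr => y _; by rewrite !inE.
Qed.

Lemma BC (x0 : T) : 2 <= tb -> 4 * (#|T| - 2) * (tb - 1) <= \sum_u \sum_v ((u != v) * #|Cset u v|).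
Proof.
move=> Ht.
apply: leq_trans BC_lower; apply: leq_trans BC_count.
rewrite -big_distrl /=.
have Hn := nongood; have Ht1 := tb_le x0.
have HS : \sum_x (gv x : nat) + \sum_x (~~ gv x : nat) = #|T|.
  by rewrite -sum_all1 -big_split /=; apply: eq_bigr => x _; case: (gv x).
set S := \sum_x (gv x : nat) in HS *.
set S' := \sum_x (~~ gv x : nat) in Hn HS.
set t := tb in Ht Hn Ht1 *.
set n := #|T| in HS Ht1 *.
have HS2 : n - t <= S by lia.
apply: leq_trans (_ : (n - t) * (4 * (t * (t - 1))) <= _); last by apply: leq_mul.
have Hb : t = (t - 1) + 1 by lia.
have Ha : n - t = (n - t - 1) + 1 by lia.
have Hn2 : n - 2 = (n - t - 1) + (t - 1) by lia.
suff H : forall a b, 4 * (a + b) * b <= (a + 1) * (4 * ((b + 1) * b)).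
  by have := H (n - t - 1) (t - 1); rewrite -Hn2 -Ha -Hb.
move=> a b; nia.
Qed.

Lemma sum_ne (u : T) : \sum_v ((u != v) : nat) = #|T| - 1.
Proof.
rewrite subn1 -(cardsC1 u) card_sum; apply: eq_bigr => y _; by rewrite !inE eq_sym.
Qed.

Lemma main_ineq (f : {set T} -> nat) :
  (forall k : 'I_r, exists u v, e u v /\ c u v = k) ->
  (forall u v, u != v -> has_disjoint_mono_superpaths e c u v (f [set u; v])) ->
  3 <= #|T| ->
  weight f + (#|T| - 2) * (r - 1) <= (#|T| - 2) * num_edges e.
Proof.
move=> Hcol Hf Hn.
have [x0 _] : exists x0 : T, x0 \in T.
  by apply/card_gt0P; apply: ltn_trans Hn.
set n := #|T| in Hn *.
set W := weight f; set E := num_edges e.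
set S1 := \sum_u \sum_v ((u != v) * f [set u; v]).
set S2 := \sum_u \sum_v ((u != v) * #|Aset u v|).
set S3 := \sum_u \sum_v ((u != v) * #|Aset v u|).
set S4 := \sum_u \sum_v ((u != v) * #|Cset u v|).
set S5 := \sum_u \sum_v ((u != v) * e u v).
set R1 := \sum_u \sum_v ((u != v) * #|[set x | e u x]|).
set R2 := \sum_u \sum_v ((u != v) * #|[set x | e v x]|).
have Hmain : 2 * S1 + S2 + S3 + S4 + 2 * S5 <= R1 + R2.
  have -> : 2 * S1 + S2 + S3 + S4 + 2 * S5 = \sum_u \sum_v ((u != v) *
     (2 * f [set u; v] + #|Aset u v| + #|Aset v u| + #|Cset u v| + 2 * e u v)).
    rewrite /S1 /S2 /S3 /S4 /S5 !big_distrr /= -!big_split /=; apply: eq_bigr => u _.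
    rewrite !big_distrr /= -!big_split /=; apply: eq_bigr => v _; nia.
  rewrite /R1 /R2 -big_split /=; apply: leq_sum => u _; rewrite -big_split /=; apply: leq_sum => v _.
  case: (eqVneq u v) => [_|Huv] //=; rewrite !mul1n.
  have [ps [Hsz [Hm Hd]]] := Hf u v Huv.
  rewrite -Hsz; exact: pair_bound.
have HS1 : S1 = 2 * W by rewrite /S1 (dcount f).
have HS5 : S5 = 2 * E by rewrite /S5 handshake.
have HR1 : R1 = (n - 1) * (2 * E).
  rewrite /R1 -deg_sum big_distrr /=; apply: eq_bigr => u _.
  by rewrite -big_distrl /= sum_ne mulnC.
have HR2 : R2 = (n - 1) * (2 * E).
  rewrite /R2 exchange_big -deg_sum big_distrr /=; apply: eq_bigr => u _.
  rewrite -(sum_ne u) big_distrl /=; apply: eq_bigr => v _; by rewrite eq_sym mulnC.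
have HS3 : S3 = S2.
  rewrite /S3 /S2 exchange_big /=; apply: eq_bigr => u _; apply: eq_bigr => v _; by rewrite eq_sym.
have HS2 : 2 * (n - 2) * \sum_k (~~ bad k : nat) <= S2.
  rewrite /S2 SA_split big_distrr /=; apply: leq_sum => k _.
  case Bk: (bad k) => /=; first by rewrite muln0.
  rewrite muln1; move/negbT: Bk; rewrite negb_and => /orP [Hz|Hl].
    case: (leqP #|leaves k| 1) => Hl; last exact: GA.
    apply: GB => //; move/forallPn: Hz => [z]; rewrite negbK => /eqP Hz; by exists z.
  by apply: GA; rewrite ltnNge.
have Hgt : \sum_k (~~ bad k : nat) + tb = r.
  rewrite /tb -big_split /= -[RHS]card_ord -sum1_card; apply: eq_bigr => k _; by case: (bad k).
set g := \sum_k (~~ bad k : nat) in HS2 Hgt.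
have HnE : (n - 1) * E = (n - 2) * E + E.
  have -> : n - 1 = (n - 2).+1 by lia.
  by rewrite mulSn addnC.
have HX : (n - 2) * (r - 1) <= (n - 2) * g + (n - 2) * (tb - 1).
  rewrite -mulnDr leq_mul2l; apply/orP; right; lia.
case: (leqP 2 tb) => Ht.
  have HS4 := BC x0 Ht.
  rewrite -/S4 in HS4.
  move: Hmain; rewrite HS1 HS5 HR1 HR2 HS3.
  move: HS2 HS4 HX HnE.
  set A1 := (n - 2) * (r - 1); set A2 := (n - 2) * g; set A3 := (n - 2) * (tb - 1).
  set A4 := (n - 2) * E; set A5 := (n - 1) * E.
  have -> : 2 * (n - 2) * g = 2 * A2 by rewrite /A2 mulnA.
  have -> : 4 * (n - 2) * (tb - 1) = 4 * A3 by rewrite /A3 mulnA.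
  have -> : (n - 1) * (2 * E) = 2 * A5 by rewrite /A5 mulnCA.
  lia.
have HX2 : (n - 2) * (r - 1) <= (n - 2) * g by rewrite leq_mul2l; apply/orP; right; lia.
move: Hmain; rewrite HS1 HS5 HR1 HR2 HS3.
move: HS2 HX2 HnE.
set A1 := (n - 2) * (r - 1); set A2 := (n - 2) * g.
set A4 := (n - 2) * E; set A5 := (n - 1) * E.
have -> : 2 * (n - 2) * g = 2 * A2 by rewrite /A2 mulnA.
have -> : (n - 1) * (2 * E) = 2 * A5 by rewrite /A5 mulnCA.
lia.
Qed.
End Main.


Theorem theorem2p10 (T : finType) (n r : nat) (e : rel T)
    (c : T -> T -> 'I_r) (f : {set T} -> nat) :
  simple_graph e ->
  #|T| = n -> 3 <= n ->
  edge_colouring_exactly e c ->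
  (forall u v : T, u != v ->
     has_disjoint_mono_superpaths e c u v (f [set u; v])) ->
  ceil_div (weight f) (n - 2) + r - 1 <= num_edges e.
Proof.
move=> [esym eirr] Hcard Hn [csym Hcol] Hf.
have H := @main_ineq T r e c esym eirr csym f Hcol Hf.
rewrite Hcard in H; have {}H := H Hn.
have [x0 _] : exists x0 : T, x0 \in T by apply/card_gt0P; rewrite Hcard; apply: ltn_trans Hn.
have Hr : 0 < r by case: (c x0 x0) => m Hm; apply: leq_ltn_trans Hm.
set W := weight f in H *; set E := num_edges e in H *.
rewrite /ceil_div.
have Hq : 0 < n - 2 by lia.
have -> : (W + (n - 2).-1) %/ (n - 2) + r - 1 = ((r - 1) * (n - 2) + (W + (n - 2).-1)) %/ (n - 2).
  rewrite divnMDl //; set q := (_ %/ _); lia.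
apply: leq_trans (_ : (E * (n - 2) + (n - 2).-1) %/ (n - 2) <= _).
  apply: leq_div2r; rewrite mulnC [E * _]mulnC; lia.
rewrite divnMDl // divn_small ?addn0 //; lia.
Qed.
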